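(* Let $V$ be a real vector space of odd finite dimension, $G\le\mathrm{GL}(V)$ a finite group such that $V$ is a non-trivial irreducible $\mathbb{R}G$-module and $-\mathrm{id}_V\notin G$, and let $n\in N_{\mathrm{GL}(V)}(G)$ have finite order, with $\nu=\mathrm{ad}_n$. Suppose there is $g\in G$ such that $\alpha:=\mathrm{ad}_g\circ\nu\in\mathrm{Aut}(G)$ has even order and $$\dim(V)>(|\alpha|-1)\,|C_G(\alpha')|^{1/2}$$ for every $\alpha'\in\langle\alpha\rangle$ of prime order. Then the triple $(G,V,n)$ has the $E1$-property, i.e. there is $h\in G$ such that $hn$ has eigenvalue $1$.
   Context: For $x\in N_{\mathrm{GL}(V)}(G)$, $\mathrm{ad}_x\in\mathrm{Aut}(G)$ denotes conjugation $y\mapsto xyx^{-1}$. For $\beta\in\mathrm{Aut}(G)$, $C_G(\beta)=\{y\in G\mid\beta(y)=y\}$, and $|\alpha|$ denotes the order of $\alpha$. *)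

(* Defs.v *)
From HB Require Import structures.
From mathcomp Require Import all_boot all_order all_algebra all_fingroup.
From mathcomp Require Import mxrepresentation.
From mathcomp Require Import reals.
Set Implicit Arguments. Unset Strict Implicit. Unset Printing Implicit Defensive.
Import Order.TTheory GRing.Theory Num.Theory.
Local Open Scope ring_scope.

Section Defs.
Variables (R : fieldType) (gT : finGroupType) (G : {group gT}) (d : nat).
Variable rG : mx_representation R G d.

Definition ad_is_id (x : 'M[R]_d) : bool :=
  [forall y in G, x *m rG y *m invmx x == rG y].

Definition ad_order_is (x : 'M[R]_d) (k : nat) : Prop :=
  (0 < k)%N /\ ad_is_id (x ^+ k) /\
  (forall j : nat, (0 < j)%N -> (j < k)%N -> ~~ ad_is_id (x ^+ j)).

Definition ad_centraliser (x : 'M[R]_d) : {set gT} :=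
  [set y in G | x *m rG y *m invmx x == rG y].
End Defs.

(* Main.v *)
Require Import Defs.
From HB Require Import structures.
From mathcomp Require Import all_boot all_order all_algebra all_fingroup.
From mathcomp Require Import mxrepresentation.
From mathcomp Require Import reals.
From mathcomp Require Import polyrcf lra zify.
Import Order.TTheory GRing.Theory Num.Theory.
Local Open Scope ring_scope.
Set Implicit Arguments. Unset Strict Implicit. Unset Printing Implicit Defensive.
Section Arith.
Local Open Scope nat_scope.
Lemma arith (i k : nat) : (0 < i < k)%N -> exists p e,
  [/\ prime p, (0 < e)%N, (k %| i * e * p)%N &
      forall q, (0 < q < p)%N -> ~~ (k %| i * e * q)%N].
Proof.
move=> /andP [i0 ik].
set d := gcdn i k.
have d0 : (0 < d)%N by rewrite gcdn_gt0 i0.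
have hi : i = (i %/ d * d)%N by rewrite divnK // dvdn_gcdl.
have hk : k = (k %/ d * d)%N by rewrite divnK // dvdn_gcdr.
set i' := i %/ d in hi *; set k' := k %/ d in hk *.
have cop : coprime i' k'.
  rewrite /coprime; apply/eqP; apply/eqP; rewrite -(eqn_pmul2r d0) muln_gcdl.
  by rewrite -hi -hk mul1n.
have k'1 : (1 < k')%N.
  case: k' hk cop => [|[|k'']] //= hk _; first by move: ik; rewrite hk; lia.
  have : (k %| i)%N by rewrite hk mul1n dvdn_gcdl.
  by move/(dvdn_leq i0); lia.
have pp := pdiv_prime k'1.
have hk' : k' = (k' %/ pdiv k' * pdiv k')%N by rewrite divnK // pdiv_dvd.
set p := pdiv k' in pp hk' *; set e := k' %/ p in hk' *.
clearbody d i' k' p e; subst i k k'.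
have e0 : 0 < e by rewrite lt0n; apply/eqP => e0; move: k'1; rewrite e0.
exists p, e; split => //.
- apply/dvdnP; exists i'; lia.
move=> q /andP [q0 qp]; apply/negP.
rewrite (_ : i' * d * e * q = d * (e * (i' * q))); last by lia.
rewrite (_ : e * p * d = d * (e * p)); last by lia.
rewrite !dvdn_pmul2l // Gauss_dvdr; first by move/(dvdn_leq q0); lia.
rewrite coprime_sym; apply: (coprime_dvdr _ cop); exact: dvdn_mull.
Qed.
End Arith.
Section Prop3.
Variables (R : realType) (gT : finGroupType) (G : {group gT}) (m : nat).
Variable rG : mx_representation R G m.+1.
Hypothesis Hodd : odd m.+1.
Hypothesis Hirr : mx_irreducible rG.
Local Notation M := 'M[R]_m.+1.

Lemma invmx_inv (A : M) : invmx A = A^-1.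
Proof. by []. Qed.

Lemma real_eigen (A : M) : exists a, eigenvalue A a.
Proof.
have [|a Ha] := @odd_poly_root R (char_poly A).
  by rewrite size_char_poly /= negbK.
by exists a; rewrite eigenvalue_root_char.
Qed.

Lemma schur_scalar (A : M) :
  (forall y, y \in G -> A * rG y = rG y * A) -> exists a, A = a%:M.
Proof.
move=> cA; have [a /eigenvalueP [v Hv nz]] := real_eigen A.
exists a; apply/eqP; rewrite -subr_eq0; apply/negPn/negP => nzf.
have cf : centgmx rG (A - a%:M).
  apply/centgmxP => x Gx.
  by rewrite mulmxBl mulmxBr scalar_mxC !mulmxE cA.
have uf := mx_Schur Hirr cf nzf.
have v0 : v *m (A - a%:M) = 0 by rewrite mulmxBr Hv mul_mx_scalar subrr.
by move: nz; rewrite -(mulmxK uf v) v0 mul0mx eqxx.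
Qed.

Lemma detX (A : M) e : \det (A ^+ e) = \det A ^+ e.
Proof. by elim: e => [|e IH]; rewrite ?expr0 ?det1 // !exprS detM IH. Qed.

Lemma real_root1 (x : R) e : (0 < e)%N -> x ^+ e = 1 -> x ^+ 2 = 1.
Proof.
move=> e0 xe; have : `|x| ^+ e == 1 by rewrite -normrX xe normr1.
rewrite pexpr_eq1 // => /eqP nx.
by rewrite -real_normK ?num_real // nx expr1n.
Qed.

Lemma odd_root1 (x : R) e : odd e -> x ^+ e = 1 -> x = 1.
Proof.
move=> oe xe; have e0 : (0 < e)%N by case: e oe xe.
have /eqP := real_root1 e0 xe; rewrite sqrf_eq1 => /orP [/eqP //|/eqP x1].
by move: xe; rewrite x1 -signr_odd oe expr1 => h; exfalso; lra.
Qed.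

Lemma adc_eq (A B : M) : A \is a GRing.unit ->
  (A *m B *m invmx A == B) = (A * B == B * A).
Proof.
move=> uA; rewrite !mulmxE invmx_inv; apply/eqP/eqP => h.
  by rewrite -[in RHS]h divrK.
by rewrite h mulrK.
Qed.

Lemma ad_id_comm (A : M) : A \is a GRing.unit -> ad_is_id rG A ->
  forall y, y \in G -> A * rG y = rG y * A.
Proof.
move=> uA /forall_inP h y Gy; apply/eqP; rewrite -adc_eq //; exact: h.
Qed.

Lemma comm_ad_id (A : M) : A \is a GRing.unit ->
  (forall y, y \in G -> A * rG y = rG y * A) -> ad_is_id rG A.
Proof.
move=> uA h; apply/forall_inP => y Gy; rewrite adc_eq //; exact/eqP/h.
Qed.

Lemma ad_centraliserE (A : M) : A \is a GRing.unit ->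
  ad_centraliser rG A = [set y in G | A * rG y == rG y * A].
Proof.
by move=> uA; apply/setP => y; rewrite !inE adc_eq.
Qed.

Variables (n : M) (g : gT) (k : nat).
Hypotheses (Hg : g \in G) (Hn_unit : n \in unitmx).
Hypothesis Hn_norm1 : forall y, y \in G ->
        exists2 z, z \in G & n *m rG y *m invmx n = rG z.
Hypothesis Hn_ord : exists2 K : nat, (0 < K)%N & n ^+ K = 1%:M.
Hypothesis Hk : ad_order_is rG (rG g *m n) k.
Hypothesis Hk_even : ~~ odd k.

Local Notation s := (rG g * n).

Lemma s_unit : s \is a GRing.unit.
Proof. by rewrite unitrMr ?repr_mx_unitr. Qed.

Lemma sX_unit i : s ^+ i \is a GRing.unit.
Proof. exact: unitrX s_unit. Qed.

Lemma sk1 : s ^+ k = 1.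
Proof.
case: Hk => k0 [Hid _].
have [a ha] := schur_scalar (ad_id_comm (sX_unit k) Hid).
have dg : \det (rG g) ^+ 2 = 1.
  apply: (@real_root1 _ #[g]%g); first exact: order_gt0.
  by rewrite -detX -repr_mxX // expg_order repr_mx1 det1.
have dn : \det n ^+ 2 = 1.
  case: Hn_ord => K K0 hK; apply: (real_root1 K0).
  by rewrite -detX hK det1.
have ds : \det s ^+ k = 1.
  have -> : k = (2 * k./2)%N.
    by rewrite mul2n -[LHS]odd_double_half (negbTE Hk_even) add0n.
  by rewrite detM exprMn !exprM dg dn !expr1n mulr1.
have : a ^+ m.+1 = 1 by rewrite -det_scalar -ha detX ds.
by move/(odd_root1 Hodd) => a1; rewrite ha a1.
Qed.

Lemma ad_id_iff j : ad_is_id rG (s ^+ j) = (k %| j)%N.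
Proof.
case: Hk => k0 [Hid Hmin].
rewrite -(expr_mod j sk1) /dvdn; case: (posnP (j %% k)) => [->|h].
  rewrite expr0 ?eqxx; apply: comm_ad_id; first exact: unitr1.
  by move=> y _; rewrite mul1r mulr1.
rewrite (negbTE (Hmin _ h (ltn_pmod _ k0))).
by move: h; rewrite lt0n => /negbTE.
Qed.

Lemma s_norm i y : y \in G -> exists2 z, z \in G & s ^+ i * rG y = rG z * s ^+ i.
Proof.
elim: i y => [|i IH] y Gy.
  by exists y => //; rewrite expr0 mul1r mulr1.
have [z Gz hz] := IH y Gy.
have [w Gw hw] := Hn_norm1 Gz.
have hw' : n * rG z = rG w * n.
  by rewrite -hw !mulmxE invmx_inv divrK.
exists (g * w * g^-1)%g; first by rewrite !groupM ?groupV.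
rewrite exprS -mulrA hz !mulrA -(mulrA (rG g)) hw'.
rewrite !repr_mxMr ?groupM ?groupV // repr_mxVr //.
by rewrite !mulrA divrK ?repr_mx_unitr.
Qed.

Definition Fm (h : gT) (j : nat) : M := (rG h * s ^+ j)^T * (rG h * s ^+ j).
Definition S : M := \sum_(j < k) \sum_(h in G) Fm h j.

Lemma trM (A B : M) : (A * B)^T = B^T * A^T.
Proof. exact: trmx_mul. Qed.

Lemma sandw (C X : M) : X^T * (C^T * C) * X = (C * X)^T * (C * X).
Proof. by rewrite trM !mulrA. Qed.

Lemma S_invG_j y j : y \in G ->
  (rG y)^T * (\sum_(h in G) Fm h j) * rG y = \sum_(h in G) Fm h j.
Proof.
move=> Gy; rewrite mulr_sumr mulr_suml.
have [z Gz hz] := s_norm j Gy.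
transitivity (\sum_(h in G) Fm (h * z)%g j).
  apply: eq_bigr => h Gh; rewrite /Fm sandw.
  by rewrite -!mulrA hz !mulrA repr_mxMr // !mulrA.
rewrite [RHS](reindex_inj (mulIg z)) /=; apply: eq_bigl => h.
by rewrite groupMr.
Qed.

Lemma S_invG y : y \in G -> (rG y)^T * S * rG y = S.
Proof.
move=> Gy; rewrite /S mulr_sumr mulr_suml; apply: eq_bigr => j _.
exact: S_invG_j.
Qed.

Lemma k_pos : (0 < k)%N.
Proof. by case: Hk. Qed.

Lemma S_invs : s^T * S * s = S.
Proof.
rewrite /S mulr_sumr mulr_suml.
transitivity (\sum_(j < k) \sum_(h in G) Fm h j.+1).
  apply: eq_bigr => j _; rewrite mulr_sumr mulr_suml; apply: eq_bigr => h _.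
  by rewrite /Fm sandw -mulrA -exprSr.
case: k k_pos sk1 => // k1 _ hk1.
rewrite big_ord_recr big_ord_recl /= addrC; congr (_ + _).
by apply: eq_bigr => h _; rewrite /Fm hk1 expr0.
Qed.

Lemma S_inv h i : h \in G ->
  (rG h * s ^+ i)^T * S * (rG h * s ^+ i) = S.
Proof.
move=> Gh.
have sw : forall (A B X : M), (A * B)^T * X * (A * B) = B^T * (A^T * X * A) * B.
  by move=> A B X; rewrite trM !mulrA.
rewrite sw S_invG //.
elim: i => [|i IH]; first by rewrite expr0 trmx1 mul1r mulr1.
by rewrite exprS sw S_invs.
Qed.

Lemma qE (w : 'cV[R]_m.+1) : (w^T *m w) 0 0 = \sum_a w a 0 ^+ 2.
Proof. by rewrite mxE; apply: eq_bigr => a _; rewrite mxE expr2. Qed.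

Lemma q_ge0 (w : 'cV[R]_m.+1) : 0 <= (w^T *m w) 0 0.
Proof. by rewrite qE sumr_ge0 // => a _; rewrite sqr_ge0. Qed.

Lemma S_unit : S \is a GRing.unit.
Proof.
rewrite -[_ \is a _]/(S \in unitmx) unitmxE unitfE.
apply/negP => /det0P [v nz vS].
have e : forall (C : M), (v *m (C^T * C) *m v^T) 0 0
    = ((C *m v^T)^T *m (C *m v^T)) 0 0.
  by move=> C; rewrite trmx_mul trmxK !mulmxA.
have h0 : \sum_(j < k) \sum_(h in G) ((v *m Fm h j *m v^T) 0 0) = 0.
  transitivity ((v *m S *m v^T) 0 0); last by rewrite vS mul0mx mxE.
  rewrite /S mulmx_sumr mulmx_suml summxE; apply: eq_bigr => j _.
  by rewrite mulmx_sumr mulmx_suml summxE.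
have pos : forall j (h : gT), 0 <= (v *m Fm h j *m v^T) 0 0.
  by move=> j h; rewrite /Fm e q_ge0.
have k0 := k_pos.
have pos2 : forall j : 'I_k, true -> 0 <= \sum_(h in G) (v *m Fm h j *m v^T) 0 0.
  by move=> j _; rewrite sumr_ge0.
move: (psumr_eq0P pos2 h0 (i := Ordinal k0) isT) => /= h1.
have := psumr_eq0P (fun h _ => pos (Ordinal k0) h) h1 (group1 G).
rewrite /Fm e /= expr0 repr_mx1 mulr1 mul1mx qE => h2.
move/negP: nz; apply; apply/eqP/matrixP => i a.
have := psumr_eq0P (fun a _ => sqr_ge0 (v^T a 0)) h2 (i := a) isT.
by rewrite !mxE ord1 => /eqP; rewrite sqrf_eq0 => /eqP.
Qed.

Lemma inv_tr h i : h \in G -> \tr ((rG h * s ^+ i)^-1) = \tr (rG h * s ^+ i).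
Proof.
move=> Gh; set A := rG h * s ^+ i.
have uA : A \is a GRing.unit by rewrite unitrMr ?repr_mx_unitr ?sX_unit.
have BA : (S^-1 * A^T * S) * A = 1.
  have -> : S^-1 * A^T * S * A = S^-1 * (A^T * S * A) by rewrite !mulrA.
  by rewrite S_inv // mulVr // S_unit.
have -> : A^-1 = S^-1 * A^T * S by rewrite -[A^-1]mul1r -BA mulrK.
have := mxtrace_mulC (S^-1 * A^T) S; rewrite !mulmxE => ->.
by rewrite mulVKr ?S_unit // mxtrace_tr.
Qed.

Lemma tr_conj (P X : M) : P \is a GRing.unit -> \tr (P * X * P^-1) = \tr X.
Proof.
move=> uP; have := mxtrace_mulC (P * X) P^-1; rewrite !mulmxE => ->.
by rewrite mulKr.
Qed.

Lemma Phi (X : M) :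
  \sum_(h in G) rG h * X * (rG h)^-1 = ((\tr X *+ #|G|) / (m.+1)%:R)%:M.
Proof.
set Y := \sum_(h in G) _.
have cY : forall y, y \in G -> Y * rG y = rG y * Y.
  move=> y Gy; rewrite /Y mulr_sumr mulr_suml.
  transitivity (\sum_(h in G) rG (y * h)%g * X * (rG (y * h)%g)^-1 * rG y).
    rewrite [LHS](reindex_inj (mulgI y)) /=; apply: eq_bigl => h.
    by rewrite groupMl.
  apply: eq_bigr => h Gh.
  rewrite repr_mxMr // invrM ?repr_mx_unitr // -!mulrA mulVr ?repr_mx_unitr //.
  by rewrite mulr1.
have [c hc] := schur_scalar cY.
have tY : \tr Y = \tr X *+ #|G|.
  rewrite /Y raddf_sum /= (eq_bigr (fun _ => \tr X)); first by rewrite sumr_const.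
  by move=> h Gh; rewrite tr_conj ?repr_mx_unitr.
rewrite hc; congr (_ %:M).
move: tY; rewrite hc mxtrace_scalar => <-.
by rewrite -[c *+ _]mulr_natr mulfK // pnatr_eq0.
Qed.

Lemma tr_delta (P : M) a b : \tr (P *m delta_mx b a) = P a b.
Proof.
rewrite /mxtrace (bigD1 a) //= big1 ?addr0 => [|c nca]; rewrite mxE.
  rewrite (bigD1 b) //= big1 ?addr0 => [|x nxb]; rewrite mxE.
    by rewrite !eqxx mulr1.
  by rewrite (negbTE nxb) mulr0.
by apply: big1 => x _; rewrite mxE (negbTE nca) andbF mulr0.
Qed.

Lemma entry_delta (A B : M) a b : (A *m delta_mx a b *m B) a b = A a a * B b b.
Proof.
rewrite -(@mul_delta_mx _ m.+1 1 m.+1 0) mulmxA -colE -mulmxA -rowE.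
by rewrite mxE big_ord1 !mxE.
Qed.

Lemma trtr (A B : M) :
  \tr A * \tr B = \sum_a \sum_b \tr (A *m delta_mx a b *m B *m delta_mx b a).
Proof.
transitivity (\sum_a \sum_b A a a * B b b).
  by rewrite /mxtrace mulr_suml; apply: eq_bigr => a _; rewrite mulr_sumr.
by apply: eq_bigr => a _; apply: eq_bigr => b _; rewrite tr_delta entry_delta.
Qed.

Definition Ft (A : M) := \tr A * \tr (A^-1).

Lemma pairing (u : M) : u \is a GRing.unit ->
  \sum_(h in G) Ft (rG h * u) = #|G|%:R.
Proof.
move=> uu; rewrite /Ft.
transitivity (\sum_(h in G) \sum_a \sum_b
   \tr (rG h * (u *m delta_mx a b *m u^-1) * (rG h)^-1 *m delta_mx b a)).
  apply: eq_bigr => h Gh; rewrite trtr; apply: eq_bigr => a _.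
  apply: eq_bigr => b _; rewrite invrM ?repr_mx_unitr //.
  by rewrite !mulmxE !mulrA.
rewrite exchange_big /=.
transitivity (\sum_(a < m.+1) ((#|G|%:R) / (m.+1)%:R : R)).
  apply: eq_bigr => a _; rewrite exchange_big /= (bigD1 a) //= [X in _ + X]big1 ?addr0.
    rewrite -linear_sum /= -mulmx_suml Phi tr_delta mxE eqxx mulr1n.
    by rewrite tr_conj // -[delta_mx a a]mul1mx tr_delta mxE eqxx ?mulr1n.
  move=> b nba; rewrite -linear_sum /= -mulmx_suml Phi tr_delta mxE.
  by rewrite eq_sym (negbTE nba) mulr0n.
by rewrite sumr_const card_ord -[(_ / _) *+ _]mulr_natr divfK // pnatr_eq0.
Qed.

Lemma conj_in i y : y \in G ->
  exists2 h, h \in G & rG y * s ^+ i * (rG y)^-1 = rG h * s ^+ i.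
Proof.
move=> Gy; have [z Gz hz] := s_norm i (groupVr Gy).
exists (y * z)%g; first by rewrite groupM.
by rewrite -repr_mxVr // -mulrA hz mulrA repr_mxMr.
Qed.

Definition sig i y :=
  odflt 1%g [pick h in G | rG y * s ^+ i * (rG y)^-1 == rG h * s ^+ i].

Lemma sigP i y : y \in G ->
  sig i y \in G /\ rG y * s ^+ i * (rG y)^-1 = rG (sig i y) * s ^+ i.
Proof.
move=> Gy; rewrite /sig; case: pickP => [h /andP [Gh /eqP e]|none] //=.
have [h Gh e] := conj_in i Gy.
by move: (none h); rewrite Gh e eqxx.
Qed.

Lemma tr_bound i : \tr (s ^+ i) ^+ 2 <= #|ad_centraliser rG (s ^+ i)|%:R.
Proof.
set u := s ^+ i; have uu : u \is a GRing.unit := sX_unit i.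
set C := ad_centraliser rG u.
have Fu : Ft u = \tr u ^+ 2.
  rewrite /Ft expr2; have := inv_tr i (group1 G).
  by rewrite repr_mx1 -/u mul1r => ->.
have Fge0 : forall h, h \in G -> 0 <= Ft (rG h * u).
  by move=> h Gh; rewrite /Ft inv_tr // -expr2 sqr_ge0.
have fib : forall h, h \in G -> (#|[set y in G | sig i y == h]| <= #|C|)%N.
  move=> h Gh.
  case: (set_0Vmem [set y in G | sig i y == h]) => [->|[y0]]; first by rewrite cards0.
  rewrite inE => /andP [Gy0 /eqP s0].
  apply: leq_trans (leq_imset_card (mulg y0) C).
  apply: subset_leq_card; apply/subsetP => y; rewrite inE => /andP [Gy /eqP sy].
  apply/imsetP; exists (y0^-1 * y)%g; last by rewrite mulKVg.
  rewrite /C ad_centraliserE // inE groupM ?groupV //=.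
  have e : rG y * u * (rG y)^-1 = rG y0 * u * (rG y0)^-1.
    by rewrite (proj2 (sigP i Gy)) (proj2 (sigP i Gy0)) sy s0.
  have h1 : rG y * u = rG y0 * u * (rG y0)^-1 * rG y.
    by rewrite -e divrK ?repr_mx_unitr.
  rewrite repr_mxMr ?groupV // repr_mxVr //; apply/eqP.
  by rewrite -mulrA h1 !mulrA mulVr ?repr_mx_unitr // mul1r.
have e1 : \sum_(y in G) Ft (rG y * u * (rG y)^-1) = #|G|%:R * Ft u.
  rewrite (eq_bigr (fun _ => Ft u)) ?sumr_const ?mulr_natl // => y Gy.
  rewrite /Ft tr_conj ?repr_mx_unitr //; congr (_ * _).
  rewrite !invrM ?invrK ?unitrV ?repr_mx_unitr ?unitrMr ?repr_mx_unitr //.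
  by rewrite mulrA tr_conj ?repr_mx_unitr.
have e2 : \sum_(y in G) Ft (rG y * u * (rG y)^-1)
    = \sum_(h in G) #|[set y in G | sig i y == h]|%:R * Ft (rG h * u).
  rewrite (eq_bigr (fun y => Ft (rG (sig i y) * u))); last first.
    by move=> y Gy; case: (sigP i Gy) => _ ->.
  rewrite (partition_big (sig i) (mem G)) /=; last by move=> y Gy; case: (sigP i Gy).
  apply: eq_bigr => h Gh.
  rewrite (eq_bigr (fun _ => Ft (rG h * u))); last by move=> y /andP [_ /eqP ->].
  rewrite sumr_const mulr_natl; congr (_ *+ _).
  by apply: eq_card => y; rewrite !inE.
have le : #|G|%:R * Ft u <= #|G|%:R * (#|C|%:R : R).
  rewrite -e1 e2 -(pairing uu) mulr_suml.
  apply: ler_sum => h Gh; rewrite [Ft _ * _]mulrC.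
  by apply: ler_wpM2r; [exact: Fge0|rewrite ler_nat fib].
rewrite -Fu -(ler_pM2l (x := #|G|%:R)) //.
by rewrite ltr0n cardG_gt0.
Qed.

Lemma c_sub i e :
  ad_centraliser rG (s ^+ i) \subset ad_centraliser rG (s ^+ (i * e)).
Proof.
apply/subsetP => y; rewrite !ad_centraliserE ?sX_unit // !inE.
case/andP => Gy /eqP c; rewrite Gy /= exprM; apply/eqP.
apply: commr_sym; apply: commrX; exact: commr_sym.
Qed.

Hypothesis Hbound : forall (j p : nat), prime p ->
        ad_order_is rG ((rG g *m n) ^+ j) p ->
        (k.-1)%:R * Num.sqrt (#|ad_centraliser rG ((rG g *m n) ^+ j)|%:R)
          < ((m.+1)%:R : R).

Lemma tr_lower i : (0 < i < k)%N -> - ((m.+1)%:R) < (k.-1)%:R * \tr (s ^+ i).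
Proof.
move=> ik; have [p [e [pp e0 kd nk]]] := arith ik.
have ho : ad_order_is rG (s ^+ (i * e)) p.
  split; first exact: prime_gt0.
  split; first by rewrite -exprM ad_id_iff.
  by move=> q q0 qp; rewrite -exprM ad_id_iff; apply: nk; rewrite q0.
have hb := Hbound pp ho.
have c0 : 0 <= (#|ad_centraliser rG (s ^+ (i * e))|%:R : R) by rewrite ler0n.
have t2 : \tr (s ^+ i) ^+ 2 <= #|ad_centraliser rG (s ^+ (i * e))|%:R.
  apply: le_trans (tr_bound i) _; rewrite ler_nat.
  exact: subset_leq_card (c_sub i e).
have A : - \tr (s ^+ i) <= Num.sqrt (#|ad_centraliser rG (s ^+ (i * e))|%:R).
  apply: le_trans (ler_norm _) _.
  by rewrite normrN -sqrtr_sqr ler_sqrt.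
rewrite ltrNl -mulrN; apply: le_lt_trans hb.
by apply: ler_wpM2l; rewrite ?ler0n.
Qed.

Lemma main_sec : eigenvalue s 1.
Proof.
have sk := sk1; have k0 := k_pos.
set P := \sum_(i < k) s ^+ i.
have K0 : (0 < k.-1)%N.
  by move: Hk_even k0; case: k => [|[|]].
have trP : 0 < \tr P.
  rewrite raddf_sum /= -(prednK k0) big_ord_recl /= expr0 mxtrace1.
  have lower : forall i : 'I_(k.-1),
      - (m.+1)%:R < (k.-1)%:R * \tr (s ^+ (bump 0 i)).
    move=> i; apply: tr_lower; rewrite /bump /= add1n /=.
    by rewrite -[X in (_ < X)%N](prednK k0) ltnS ltn_ord.
  have hasT : has (fun _ : 'I_(k.-1) => true) (index_enum 'I_(k.-1)).
    by apply/hasP; exists (Ordinal K0) => //; rewrite mem_index_enum.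
  have S1 := ltr_sum hasT (fun i _ => lower i).
  rewrite sumr_const card_ord -mulr_sumr in S1.
  have K0' : (0 : R) < (k.-1)%:R by rewrite ltr0n.
  rewrite -(pmulr_rgt0 _ K0') mulrDr.
  move: S1; rewrite mulNrn -mulr_natl => S1.
  set X := \sum_(i < k.-1) _ in S1 *.
  set a := (k.-1)%:R in S1 K0' *; set b := (m.+1)%:R in S1 *.
  rewrite !mulr1 in S1 *.
  have E : b *- k.-1 = - (a * b) by rewrite /a mulr_natl.
  rewrite E in S1; lra.
have nP : P != 0 by apply/eqP => P0; move: trP; rewrite P0 mxtrace0 ltxx.
have PS : P * (s - 1) = 0.
  have c : GRing.comm (s - 1) P.
    apply: commr_sum => i _; apply: commrX.
    exact: commr_sym (commrB (commr_refl s) (commr1 s)).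
  by rewrite -c -subrX1 sk subrr.
apply/eigenvalueP.
case: (pickP (fun r => row r P != 0)) => [r nr|all0]; last first.
  move/eqP: nP; case; apply/row_matrixP => r; rewrite row0.
  by move: (all0 r) => /negbFE/eqP.
exists (row r P) => //.
have : row r P *m (s - 1) = 0 by rewrite -row_mul mulmxE PS row0.
by rewrite mulmxBr mulmx1 scale1r => /eqP; rewrite subr_eq0 => /eqP.
Qed.

End Prop3.
Unset Implicit Arguments.

Theorem proposition3 (R : realType) (gT : finGroupType) (G : {group gT})
    (d : nat) (rG : mx_representation R G d)
    (Hodd : odd d)
    (Hfaith : mx_faithful rG)
    (Hirr : mx_irreducible rG)
    (Hnontriv : exists2 y, y \in G & rG y != 1%:M)
    (HnegId : forall y, y \in G -> rG y != - 1%:M)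
    (n : 'M[R]_d) (Hn_unit : n \in unitmx)
    (Hn_norm1 : forall y, y \in G ->
        exists2 z, z \in G & n *m rG y *m invmx n = rG z)
    (Hn_norm2 : forall z, z \in G ->
        exists2 y, y \in G & n *m rG y *m invmx n = rG z)
    (Hn_ord : exists2 k : nat, (0 < k)%N & n ^+ k = 1%:M)
    (g : gT) (Hg : g \in G)
    (k : nat) (Hk : ad_order_is rG (rG g *m n) k)
    (Hk_even : ~~ odd k)
    (Hbound : forall (j p : nat), prime p ->
        ad_order_is rG ((rG g *m n) ^+ j) p ->
        (k.-1)%:R * Num.sqrt (#|ad_centraliser rG ((rG g *m n) ^+ j)|%:R)
          < (d%:R : R)) :
  exists2 h, h \in G & eigenvalue (rG h *m n) 1.
Proof.
destruct d as [|m]; first by [].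
exists g => //.
exact: (@main_sec R gT G m rG Hodd Hirr n g k Hg Hn_unit Hn_norm1 Hn_ord Hk Hk_even Hbound).
Qed.
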